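(* Let $p,q,r\in\{1,\dots,M\}$ and suppose $(\phi_q,\phi_r)$ forms a $p$-resonance. (i) If $p\in\mathcal I\cup\mathcal O$ (i.e. $\underline\omega_p\in\mathbb R$), then $q,r\in\mathcal I\cup\mathcal O$. (ii) If $p\in\mathcal P\cup\mathcal N$ (i.e. $\underline\omega_p\notin\mathbb R$), then at least one of $q,r$ belongs to $\mathcal P\cup\mathcal N$.
   Context: $\underline\omega_1,\dots,\underline\omega_M\in\mathbb C$ are the distinct eigenvalues of $-A_d(0)^{-1}(\underline\tau I+\sum_{j=1}^{d-1}\underline\eta_jA_j(0))$ for real matrices $A_j(0)$ and a boundary frequency $\beta=(\underline\tau,\underline\eta)\in\mathbb R^d\setminus0$; phases $\phi_m(x)=\beta\cdot x'+\underline\omega_mx_d$. $\mathcal I\cup\mathcal O$ is the set of $m$ with $\underline\omega_m$ real, $\mathcal P=\{m:\mathrm{Im}\,\underline\omega_m>0\}$, $\mathcal N=\{m:\mathrm{Im}\,\underline\omega_m<0\}$. Let $Z_m=\{n\in\mathbb Z:n\,\mathrm{Im}\,\underline\omega_m\ge0\}$. The pair $(\phi_q,\phi_r)$ forms a $p$-resonance if $n_p\phi_p=n_q\phi_q+n_r\phi_r$ for some $(n_p,n_q,n_r)\in\mathbb Z\times Z_q\times Z_r$ with all entries nonzero. *)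

(* Defs.v *)
From HB Require Import structures.
From mathcomp Require Import all_boot all_order all_algebra.
From mathcomp Require Import complex.
Set Implicit Arguments. Unset Strict Implicit. Unset Printing Implicit Defensive.
Import Order.TTheory GRing.Theory Num.Theory.
Local Open Scope ring_scope.
Local Open Scope complex_scope.

(* Setting (d = k+1 space dimensions x' = (t, y) in R x R^k, plus normal variable x_d):
   real N x N matrices A_1(0),...,A_k(0) (family [A]) and A_d(0) ([Ad]),
   boundary frequency beta = (tau, eta) in R^(1+k) \ 0. *)

Definition symbol_matrix (R : rcfType) (N k : nat)
  (A : 'I_k -> 'M[R]_N) (Ad : 'M[R]_N) (tau : R) (eta : 'rV[R]_k) : 'M[R[i]]_N :=
  map_mx (real_complex R)
    (- (invmx Ad *m (tau%:M + \sum_(j < k) eta 0 j *: A j))).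

Definition phase (R : rcfType) (k : nat) (tau : R) (eta : 'rV[R]_k)
  (om : R[i]) (t : R) (y : 'rV[R]_k) (xd : R) : R[i] :=
  (tau * t + \sum_(j < k) eta 0 j * y 0 j)%:C + om * xd%:C.

Definition Zset (R : rcfType) (om : R[i]) (n : int) : Prop := 0 <= n%:~R * complex.Im om.

Definition p_resonance (R : rcfType) (k M : nat) (tau : R) (eta : 'rV[R]_k)
  (omega : 'I_M -> R[i]) (p q r : 'I_M) : Prop :=
  exists (np nq nr : int),
    [/\ np != 0, nq != 0 & nr != 0] /\ Zset (omega q) nq /\ Zset (omega r) nr /\
      (forall (t : R) (y : 'rV[R]_k) (xd : R),
        phase tau eta (omega p) t y xd *~ np =
        phase tau eta (omega q) t y xd *~ nq + phase tau eta (omega r) t y xd *~ nr).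

(* Main.v *)
Require Import Defs.
From HB Require Import structures.
From mathcomp Require Import all_boot all_order all_algebra.
From mathcomp Require Import complex.
Import Order.TTheory GRing.Theory Num.Theory.
Local Open Scope ring_scope.
Local Open Scope complex_scope.
Local Open Scope ring_scope.
Local Open Scope complex_scope.
Lemma imphase (R : rcfType) k tau (eta : 'rV[R]_k) om :
  complex.Im (phase tau eta om 0 0 1) = complex.Im om.
Proof. case: om => a b; rewrite /phase /=. by rewrite !(mulr0, mul0r, addr0, add0r, mulr1). Qed.
Lemma imz (R : rcfType) (x : R[i]) (n : int) : complex.Im (x *~ n) = complex.Im x *~ n.
Proof. exact: (raddfMz (@complex.Im R : Rcomplex R -> R)). Qed.
Lemma imD (R : rcfType) (x y : R[i]) : complex.Im (x + y) = complex.Im x + complex.Im y.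
Proof. by case: x; case: y. Qed.
Lemma key (R : rcfType) (np nq nr : int) (a b c : R) :
  nq != 0 -> nr != 0 -> np != 0 ->
  0 <= nq%:~R * b -> 0 <= nr%:~R * c ->
  a *~ np = b *~ nq + c *~ nr ->
  (a = 0 -> b = 0 /\ c = 0) /\ (a != 0 -> b != 0 \/ c != 0).
Proof.
move=> hq hr hp Zq Zr.
rewrite -(mulrzl a np) -(mulrzl b nq) -(mulrzl c nr) => H.
have hq' : (nq%:~R : R) != 0 by rewrite intr_eq0.
have hr' : (nr%:~R : R) != 0 by rewrite intr_eq0.
have hp' : (np%:~R : R) != 0 by rewrite intr_eq0.
split.
  move=> a0; move: H; rewrite a0 mulr0 => /esym/eqP.
  rewrite paddr_eq0 // => /andP[h1 h2].
  move: h1 h2; rewrite !mulf_eq0 (negbTE hq') (negbTE hr') /=.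
  by move=> /eqP -> /eqP ->.
move=> a0; case: (b =P 0) => [b0|/eqP]; last by left.
right; apply/eqP => c0; move: H; rewrite b0 c0 !mulr0 addr0 => /eqP.
by rewrite mulf_eq0 (negbTE hp') (negbTE a0).
Qed.

Theorem proposition2p13 (R : rcfType) (N k M : nat)
  (A : 'I_k -> 'M[R]_N) (Ad : 'M[R]_N) (tau : R) (eta : 'rV[R]_k)
  (omega : 'I_M -> R[i])
  (hAd : Ad \in unitmx)
  (hbeta : (tau != 0) || (eta != 0))
  (hinj : injective omega)
  (heig : forall z : R[i],
     eigenvalue (symbol_matrix A Ad tau eta) z <-> exists m, z = omega m)
  (p q r : 'I_M)
  (hres : p_resonance tau eta omega p q r) :
  (complex.Im (omega p) = 0 -> complex.Im (omega q) = 0 /\ complex.Im (omega r) = 0) /\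
  (complex.Im (omega p) != 0 -> complex.Im (omega q) != 0 \/ complex.Im (omega r) != 0).
Proof.
case: hres => np [nq [nr [[hp hq hr] [Zq [Zr E]]]]].
have := congr1 (@complex.Im R) (E 0 0 1).
rewrite imD !imz !imphase.
rewrite /Zset in Zq Zr.
move=> H; exact: (@key R np nq nr _ _ _ hq hr hp Zq Zr H).
Qed.
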